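(* Let $s,t,D\ge1$ be integers and let $\mathcal G=\{G_1,\dots,G_t\}$ be an $s$-joined graph family on vertex set $V$; write $U=V\times[t]$. Suppose $Y_0\subseteq V$ satisfies $|Y_0|\ge3sD+4s$. Then there exists $U_0\subseteq U$ with $|U_0|\le s$ such that every $X\subseteq U\setminus U_0$ with $|X|\le2s$ satisfies $|N^*(X,Y_0\setminus U_0|_V)|\ge D|X|$.
   Context: A graph family $\mathcal G=\{G_1,\dots,G_t\}$ is a collection of $t$ simple graphs on a common finite vertex set $V$. For $X\subseteq V\times[t]$, $\Gamma_{\mathcal G}(X)=\bigcup_{(v,i)\in X}\{u\in V:uv\in E(G_i)\}$. The family is $s$-joined if for all $X\subseteq V\times[t]$ and $Y\subseteq V$ with $|X|\ge s$ and $|Y|\ge s$ there exist $(v,i)\in X$ and $y\in Y$ with $vy\in E(G_i)$. For $X\subseteq V\times[t]$, $X|_V=\{v\in V:(v,i)\in X\text{ for some }i\}$, and for $Y\subseteq V$, $N^*(X,Y)=(\Gamma_{\mathcal G}(X)\cap Y)\setminus X|_V$. *)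

(* Defs.v *)
From mathcomp Require Import all_boot.
Set Implicit Arguments. Unset Strict Implicit. Unset Printing Implicit Defensive.

(* A graph family on a common finite vertex set V: t simple graphs,
   each given as a symmetric irreflexive relation on V.  The index set
   [t] = {1,...,t} is represented by 'I_t. *)
Definition simple_graph (V : finType) (e : rel V) : Prop :=
  symmetric e /\ irreflexive e.

Definition graph_family (V : finType) (t : nat) (G : 'I_t -> rel V) : Prop :=
  forall i, simple_graph (G i).

Definition Gamma (V : finType) (t : nat) (G : 'I_t -> rel V)
  (X : {set V * 'I_t}) : {set V} :=
  [set u : V | [exists x in X, G x.2 x.1 u]].

Definition s_joined (V : finType) (t : nat) (G : 'I_t -> rel V) (s : nat) : Prop :=
  forall (X : {set V * 'I_t}) (Y : {set V}),
    s <= #|X| -> s <= #|Y| ->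
    exists2 x, x \in X & exists2 y, y \in Y & G x.2 x.1 y.

Definition restrV (V : finType) (t : nat) (X : {set V * 'I_t}) : {set V} :=
  [set v : V | [exists i : 'I_t, (v, i) \in X]].

Definition Nstar (V : finType) (t : nat) (G : 'I_t -> rel V)
  (X : {set V * 'I_t}) (Y : {set V}) : {set V} :=
  (Gamma G X :&: Y) :\: restrV X.

(* Main.v *)
Require Import Defs.
From mathcomp Require Import all_boot.
From mathcomp Require Import zify.

Lemma restrV_card (V : finType) (t : nat) (Z : {set V * 'I_t}) :
  #|restrV Z| <= #|Z|.
Proof.
apply: leq_trans (leq_imset_card (fun x : V * 'I_t => x.1) Z).
apply: subset_leq_card; apply/subsetP => v; rewrite inE => /existsP [i Hi].
by apply/imsetP; exists (v, i).
Qed.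

Lemma large_bound (V : finType) (t s : nat) (G : 'I_t -> rel V)
  (Y0 : {set V}) (Z : {set V * 'I_t}) :
  s_joined G s -> s <= #|Z| ->
  #|Y0| < s + #|Z| + #|Nstar G Z Y0|.
Proof.
move=> Hj HZ.
have H1 : #|Y0 :\: Gamma G Z| < s.
  rewrite ltnNge; apply/negP => Hc.
  have [x Hx [y Hy Hxy]] := Hj Z _ HZ Hc.
  move: Hy; rewrite !inE => /andP [/negP Hn _]; apply: Hn.
  by apply/existsP; exists x; rewrite Hx.
have Hs : Y0 \subset (Y0 :\: Gamma G Z) :|: restrV Z :|: Nstar G Z Y0.
  apply/subsetP => y Hy; rewrite /Nstar !in_setU !in_setD !in_setI Hy /=.
  by case: (y \in Gamma G Z); case: (y \in restrV Z).
have := subset_leq_card Hs.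
have := (leq_card_setU ((Y0 :\: Gamma G Z) :|: restrV Z) (Nstar G Z Y0)).1.
have := (leq_card_setU (Y0 :\: Gamma G Z) (restrV Z)).1.
have := @restrV_card V t Z.
lia.
Qed.

Lemma nstar_union (V : finType) (t : nat) (G : 'I_t -> rel V)
  (Y0 : {set V}) (U0 X : {set V * 'I_t}) :
  Nstar G (U0 :|: X) Y0 \subset Nstar G U0 Y0 :|: Nstar G X (Y0 :\: restrV U0).
Proof.
apply/subsetP => y; rewrite /Nstar /Gamma /restrV !inE.
case/andP => Hn /andP [/existsP [x /andP [Hx Hg]] Hy].
have HnU : ~~ [exists i, (y, i) \in U0].
  apply/negP => /existsP [i Hi]; move/negP: Hn; apply; apply/existsP; exists i.
  by rewrite inE Hi.
have HnX : ~~ [exists i, (y, i) \in X].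
  apply/negP => /existsP [i Hi]; move/negP: Hn; apply; apply/existsP; exists i.
  by rewrite inE Hi orbT.
move: Hx; rewrite inE => /orP [Hx|Hx].
  rewrite HnU Hy /= andbT; apply/orP; left.
  by apply/existsP; exists x; rewrite Hx.
rewrite HnX HnU Hy /= !andbT; apply/orP; right.
by apply/existsP; exists x; rewrite Hx.
Qed.

Theorem proposition3p1 (V : finType) (s t D : nat) (G : 'I_t -> rel V)
  (Y0 : {set V}) :
  1 <= s -> 1 <= t -> 1 <= D ->
  graph_family G -> s_joined G s ->
  3 * s * D + 4 * s <= #|Y0| ->
  exists U0 : {set V * 'I_t},
    #|U0| <= s /\
    forall X : {set V * 'I_t},
      X \subset ~: U0 -> #|X| <= 2 * s ->
      D * #|X| <= #|Nstar G X (Y0 :\: restrV U0)|.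
Proof.
move=> Hs Ht HD _ Hj HY.
pose P := fun Z : {set V * 'I_t} =>
  (#|Z| <= 3 * s) && (#|Nstar G Z Y0| <= D * #|Z|).
have P0 : P set0.
  rewrite /P cards0 /= muln0 leqn0 cards_eq0; apply/eqP/setP => y.
  rewrite /Nstar /Gamma !inE; apply/negP => /andP [_ /andP [/existsP [x]]].
  by rewrite inE.
case: (@arg_maxnP _ set0 P (fun Z : {set V * 'I_t} => #|Z|) P0) => U0 /andP [HU1 HU2] Hmax.
have HU : #|U0| < s.
  rewrite ltnNge; apply/negP => Hc.
  have := @large_bound V t s G Y0 U0 Hj Hc.
  have : D * #|U0| <= D * (3 * s) by rewrite leq_mul2l HU1 orbT.
  lia.
exists U0; split; first exact: ltnW.
move=> X HX HXs; rewrite leqNgt; apply/negP => Hlt.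
have Hdisj : [disjoint U0 & X].
  by rewrite disjoint_sym disjoints_subset.
have HZ : #|U0 :|: X| = #|U0| + #|X|.
  by rewrite cardsU; move/disjoint_setI0: Hdisj => ->; rewrite cards0 subn0.
have HPZ : P (U0 :|: X).
  rewrite /P HZ; apply/andP; split; first lia.
  have := subset_leq_card (@nstar_union V t G Y0 U0 X).
  have := (leq_card_setU (Nstar G U0 Y0) (Nstar G X (Y0 :\: restrV U0))).1.
  rewrite mulnDr; lia.
have := Hmax _ HPZ; rewrite HZ => H.
have HX0 : #|X| = 0 by lia.
by move: Hlt; rewrite HX0 muln0.
Qed.
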